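(* Assume each $f_i$ is $\mu$-strongly convex with $\mu>0$ and has $L$-Lipschitz gradient, let $x^*$ be the minimiser of $F=f+h$, and run SAGA with step size $\gamma=\frac{1}{2(\mu n+L)}$ starting from $x^0$ with $\phi_i^0=x^0$ for all $i$. Then for all $k\ge0$, \[ \mathbb{E}\Vert x^{k}-x^{*}\Vert^{2}\leq\left(1-\frac{\mu}{2(\mu n+L)}\right)^{k}\left[\Vert x^{0}-x^{*}\Vert^{2} + \frac{n}{\mu n + L}\left[f(x^{0}) -\langle f'(x^{*}),x^{0}-x^{*}\rangle -f(x^{*})\right]\right], \] where the expectation is over all random index choices up to step $k$.
   Context: Setting: $f(x)=\frac1n\sum_{i=1}^n f_i(x)$ with each $f_i\colon\mathbb{R}^d\to\mathbb{R}$ convex and differentiable with $L$-Lipschitz gradient $f_i'$; $h\colon\mathbb{R}^d\to\mathbb{R}\cup\{+\infty\}$ is proper, closed, convex; $F=f+h$. The proximal operator is $\mathrm{prox}^h_\gamma(y)=\operatorname{argmin}_{x}\{h(x)+\frac{1}{2\gamma}\Vert x-y\Vert^2\}$. SAGA algorithm with step size $\gamma>0$: start from $x^0\in\mathbb{R}^d$ and $\phi_i^0=x^0$ for all $i$. At iteration $k+1$, given $x^k$ and $\phi_1^k,\dots,\phi_n^k$: pick $j$ uniformly at random from $\{1,\dots,n\}$ (independently of the past); set $\phi_j^{k+1}=x^k$ and $\phi_i^{k+1}=\phi_i^k$ for $i\neq j$; set $w^{k+1}=x^k-\gamma\big[f_j'(\phi_j^{k+1})-f_j'(\phi_j^k)+\frac1n\sum_{i=1}^n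 f_i'(\phi_i^k)\big]$ and $x^{k+1}=\mathrm{prox}^h_\gamma(w^{k+1})$. *)

(* Defs.v *)
From Stdlib Require Import Reals List.
Require Stdlib.Vectors.Fin.
Open Scope R_scope.

Fixpoint fsum (n : nat) : (Fin.t n -> R) -> R :=
  match n with
  | O => fun _ => 0
  | S m => fun f => f Fin.F1 + fsum m (fun i => f (Fin.FS i))
  end.

Definition Vec (d : nat) := Fin.t d -> R.
Definition vadd {d} (x y : Vec d) : Vec d := fun i => x i + y i.
Definition vsub {d} (x y : Vec d) : Vec d := fun i => x i - y i.
Definition vscale {d} (a : R) (x : Vec d) : Vec d := fun i => a * x i.
Definition inner {d} (x y : Vec d) : R := fsum d (fun i => x i * y i).
Definition norm2 {d} (x : Vec d) : R := inner x x.
Definition norm {d} (x : Vec d) : R := sqrt (norm2 x).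

Definition vavg {d n} (v : Fin.t n -> Vec d) : Vec d :=
  fun k => / INR n * fsum n (fun i => v i k).

Definition has_gradient {d} (f : Vec d -> R) (g : Vec d -> Vec d) : Prop :=
  forall x eps, 0 < eps -> exists delta, 0 < delta /\
    forall y, norm (vsub y x) < delta ->
      Rabs (f y - f x - inner (g x) (vsub y x)) <= eps * norm (vsub y x).

Definition convex_fun {d} (f : Vec d -> R) : Prop :=
  forall x y t, 0 <= t <= 1 ->
    f (vadd (vscale t x) (vscale (1 - t) y)) <= t * f x + (1 - t) * f y.

Definition strongly_convex {d} (mu : R) (f : Vec d -> R) : Prop :=
  forall x y t, 0 <= t <= 1 ->
    f (vadd (vscale t x) (vscale (1 - t) y))
      <= t * f x + (1 - t) * f y - mu / 2 * t * (1 - t) * norm2 (vsub x y).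

Definition lipschitz_grad {d} (L : R) (g : Vec d -> Vec d) : Prop :=
  forall x y, norm (vsub (g x) (g y)) <= L * norm (vsub x y).

Inductive ER := ERfin (r : R) | ERinf.

Definition ER_le (a b : ER) : Prop :=
  match a, b with
  | _, ERinf => True
  | ERinf, ERfin _ => False
  | ERfin x, ERfin y => x <= y
  end.

Definition ER_plus_R (a : ER) (r : R) : ER :=
  match a with ERfin x => ERfin (x + r) | ERinf => ERinf end.

Definition R_lt_ER (r : R) (a : ER) : Prop :=
  match a with ERfin x => r < x | ERinf => True end.

Definition proper_ext {d} (h : Vec d -> ER) : Prop :=
  exists x, h x <> ERinf.

Definition convex_ext {d} (h : Vec d -> ER) : Prop :=
  forall x y t, 0 < t < 1 ->
    ER_le (h (vadd (vscale t x) (vscale (1 - t) y)))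
      (match h x, h y with
       | ERfin a, ERfin b => ERfin (t * a + (1 - t) * b)
       | _, _ => ERinf end).

Definition closed_ext {d} (h : Vec d -> ER) : Prop :=
  forall x (a : R), R_lt_ER a (h x) -> exists delta, 0 < delta /\
    forall y, norm (vsub y x) < delta -> R_lt_ER a (h y).

Definition is_prox {d} (h : Vec d -> ER) (gamma : R) (P : Vec d -> Vec d) : Prop :=
  forall y z,
    ER_le (ER_plus_R (h (P y)) (/ (2 * gamma) * norm2 (vsub (P y) y)))
          (ER_plus_R (h z) (/ (2 * gamma) * norm2 (vsub z y))).

Definition is_minimiser {d} (F : Vec d -> ER) (xs : Vec d) : Prop :=
  forall x, ER_le (F xs) (F x).

Definition saga_state (d n : nat) := (Vec d * (Fin.t n -> Vec d))%type.

Definition saga_step {d n} (g : Fin.t n -> Vec d -> Vec d) (gamma : R)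
  (P : Vec d -> Vec d) (st : saga_state d n) (j : Fin.t n) : saga_state d n :=
  let (x, phi) := st in
  let phi' := fun i => if Fin.eq_dec i j then x else phi i in
  let w := vsub x (vscale gamma
             (vadd (vsub (g j (phi' j)) (g j (phi j)))
                   (vavg (fun i => g i (phi i))))) in
  (P w, phi').

(* run SAGA along the sequence of chosen indices (head chosen first) *)
Definition saga_run {d n} (g : Fin.t n -> Vec d -> Vec d) (gamma : R)
  (P : Vec d -> Vec d) (s : list (Fin.t n)) (st : saga_state d n) : saga_state d n :=
  fold_left (saga_step g gamma P) s st.

Definition saga_init {d n} (x0 : Vec d) : saga_state d n := (x0, fun _ => x0).

(* expectation over k i.i.d. uniform indices in {1..n} *)
Fixpoint expect (n k : nat) (X : list (Fin.t n) -> R) : R :=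
  match k with
  | O => X nil
  | S k' => / INR n * fsum n (fun j => expect n k' (fun s => X (j :: s)))
  end.

(* Main.v *)
Require Import Defs.
From Stdlib Require Import Reals List Lra Lia Psatz FunctionalExtensionality.
Require Stdlib.Vectors.Fin.
Open Scope R_scope.

Lemma fsum_ext n (f g : Fin.t n -> R) : (forall i, f i = g i) -> fsum n f = fsum n g.
Proof. intros H. f_equal. apply functional_extensionality. exact H. Qed.

Lemma fsum_add n : forall (f g : Fin.t n -> R), fsum n (fun i => f i + g i) = fsum n f + fsum n g.
Proof. induction n; intros f g; simpl; [ring|]. rewrite IHn. ring. Qed.

Lemma fsum_scal n : forall c (f : Fin.t n -> R), fsum n (fun i => c * f i) = c * fsum n f.
Proof. induction n; intros c f; simpl; [ring|]. rewrite IHn. ring. Qed.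

Lemma fsum_sub n (f g : Fin.t n -> R) : fsum n (fun i => f i - g i) = fsum n f - fsum n g.
Proof.
  replace (fsum n f - fsum n g) with (fsum n f + (-1) * fsum n g) by ring.
  rewrite <- fsum_scal, <- fsum_add. apply fsum_ext. intros; ring.
Qed.

Lemma fsum_le n : forall (f g : Fin.t n -> R), (forall i, f i <= g i) -> fsum n f <= fsum n g.
Proof. induction n; intros f g H; simpl; [lra|]. specialize (IHn (fun i => f (Fin.FS i)) (fun i => g (Fin.FS i))).
  assert (H1 := H Fin.F1). assert (fsum n (fun i => f (Fin.FS i)) <= fsum n (fun i => g (Fin.FS i))) by (apply IHn; auto). lra. Qed.

Lemma fsum_const n c : fsum n (fun _ => c) = INR n * c.
Proof. induction n; simpl fsum; [simpl; ring|]. rewrite IHn, S_INR. ring. Qed.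

Lemma fsum_nonneg n (f : Fin.t n -> R) : (forall i, 0 <= f i) -> 0 <= fsum n f.
Proof. intros H. replace 0 with (fsum n (fun _ => 0)). apply fsum_le; auto. rewrite fsum_const; ring. Qed.

Lemma fsum_swap n m : forall (F : Fin.t n -> Fin.t m -> R),
  fsum n (fun i => fsum m (fun j => F i j)) = fsum m (fun j => fsum n (fun i => F i j)).
Proof. induction n; intros F; simpl.
  - rewrite fsum_const. ring.
  - rewrite IHn. rewrite <- fsum_add. reflexivity. Qed.

Lemma fsum_delta n (j : Fin.t n) : forall (A : Fin.t n -> R),
  fsum n (fun i => if Fin.eq_dec i j then A i else 0) = A j.
Proof.
  induction j; intros A; simpl.
  - destruct (Fin.eq_dec Fin.F1 Fin.F1) as [_|C]; [|congruence].
    rewrite fsum_const. ring.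
  - rewrite <- (IHj (fun i => A (Fin.FS i))).
    rewrite Rplus_0_l. apply fsum_ext. intros i.
    destruct (Fin.eq_dec (Fin.FS i) (Fin.FS j)) as [E|E];
      destruct (Fin.eq_dec i j) as [E'|E']; auto.
    + apply Fin.FS_inj in E. contradiction.
    + subst. contradiction.
Qed.

Ltac vext := apply functional_extensionality; intro; unfold vadd, vsub, vscale; ring.

Lemma inner_comm {d} (a b : Vec d) : inner a b = inner b a.
Proof. unfold inner. apply fsum_ext. intros; ring. Qed.

Lemma inner_add_l {d} (a b c : Vec d) : inner (vadd a b) c = inner a c + inner b c.
Proof. unfold inner, vadd. rewrite <- fsum_add. apply fsum_ext. intros; ring. Qed.

Lemma inner_sub_l {d} (a b c : Vec d) : inner (vsub a b) c = inner a c - inner b c.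
Proof. unfold inner, vsub. rewrite <- fsum_sub. apply fsum_ext. intros; ring. Qed.

Lemma inner_scale_l {d} t (a c : Vec d) : inner (vscale t a) c = t * inner a c.
Proof. unfold inner, vscale. rewrite <- fsum_scal. apply fsum_ext. intros; ring. Qed.

Lemma inner_add_r {d} (a b c : Vec d) : inner c (vadd a b) = inner c a + inner c b.
Proof. rewrite !(inner_comm c). apply inner_add_l. Qed.
Lemma inner_sub_r {d} (a b c : Vec d) : inner c (vsub a b) = inner c a - inner c b.
Proof. rewrite !(inner_comm c). apply inner_sub_l. Qed.
Lemma inner_scale_r {d} t (a c : Vec d) : inner c (vscale t a) = t * inner c a.
Proof. rewrite !(inner_comm c). apply inner_scale_l. Qed.

Lemma inner_vavg_l {d n} (X : Fin.t n -> Vec d) y :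
  inner (vavg X) y = / INR n * fsum n (fun j => inner (X j) y).
Proof.
  unfold inner, vavg.
  rewrite (fsum_ext d _ (fun k => / INR n * fsum n (fun j => X j k * y k))).
  - rewrite fsum_scal. f_equal. apply fsum_swap.
  - intros k. rewrite Rmult_assoc. f_equal. rewrite Rmult_comm, <- fsum_scal. apply fsum_ext. intros; ring.
Qed.

Lemma inner_vavg_r {d n} (X : Fin.t n -> Vec d) y :
  inner y (vavg X) = / INR n * fsum n (fun j => inner y (X j)).
Proof. rewrite inner_comm, inner_vavg_l. f_equal. apply fsum_ext. intros; apply inner_comm. Qed.

Lemma norm2_nonneg {d} (a : Vec d) : 0 <= norm2 a.
Proof. unfold norm2, inner. apply fsum_nonneg. intros; nra. Qed.

Lemma norm2_sub {d} (a b : Vec d) : norm2 (vsub a b) = norm2 a - 2 * inner a b + norm2 b.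
Proof. unfold norm2. rewrite inner_sub_l, !inner_sub_r, (inner_comm b a). ring. Qed.

Lemma norm2_add {d} (a b : Vec d) : norm2 (vadd a b) = norm2 a + 2 * inner a b + norm2 b.
Proof. unfold norm2. rewrite inner_add_l, !inner_add_r, (inner_comm b a). ring. Qed.

Lemma norm2_scale {d} t (a : Vec d) : norm2 (vscale t a) = t * t * norm2 a.
Proof. unfold norm2. rewrite inner_scale_l, inner_scale_r. ring. Qed.

Lemma young {d} (a b : Vec d) : 2 * inner a b <= norm2 a + norm2 b.
Proof. assert (H := norm2_nonneg (vsub a b)). rewrite norm2_sub in H. lra. Qed.

Lemma young_beta {d} beta (a b : Vec d) : 0 < beta ->
  norm2 (vsub a b) <= (1 + beta) * norm2 a + (1 + / beta) * norm2 b.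
Proof.
  intros Hb. rewrite norm2_sub.
  assert (H := norm2_nonneg (vadd (vscale beta a) b)).
  rewrite norm2_add, norm2_scale, inner_scale_l in H.
  assert (H2: - 2 * inner a b <= beta * norm2 a + / beta * norm2 b).
  { apply Rmult_le_reg_l with beta; auto.
    replace (beta * (beta * norm2 a + / beta * norm2 b)) with (beta*beta*norm2 a + norm2 b) by (field; lra).
    lra. }
  lra.
Qed.

Lemma young_t {d} t (a b : Vec d) : 0 < t -> 2 * inner a b <= t * norm2 a + / t * norm2 b.
Proof.
  intros Ht. assert (H := norm2_nonneg (vsub (vscale t a) b)).
  rewrite norm2_sub, norm2_scale, inner_scale_l in H.
  apply Rmult_le_reg_l with t; auto.
  replace (t * (t * norm2 a + / t * norm2 b)) with (t*t*norm2 a + norm2 b) by (field; lra).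
  lra.
Qed.

Lemma norm_sq {d} (a : Vec d) : norm a * norm a = norm2 a.
Proof. unfold norm. apply sqrt_sqrt, norm2_nonneg. Qed.

Lemma norm_nonneg {d} (a : Vec d) : 0 <= norm a.
Proof. unfold norm. apply sqrt_pos. Qed.

Lemma le_of_forall_pos a c : (forall t, 0 < t -> a <= t * c) -> a <= 0.
Proof.
  intros H. destruct (Rle_dec a 0) as [|Hn]; auto. exfalso.
  destruct (Rle_dec c 0) as [Hc|Hc].
  - specialize (H 1 ltac:(lra)). lra.
  - specialize (H (a / (2 * c)) ltac:(apply Rdiv_lt_0_compat; lra)).
    replace (a / (2 * c) * c) with (a / 2) in H by (field; lra). lra.
Qed.

Lemma cauchy_schwarz {d} (a b : Vec d) : inner a b <= norm a * norm b.
Proof.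
  assert (Ha := norm_nonneg a). assert (Hb := norm_nonneg b).
  assert (Ea := norm_sq a). assert (Eb := norm_sq b).
  destruct (Req_dec (norm a) 0) as [Za|Za].
  - rewrite Za, Rmult_0_l.
    apply le_of_forall_pos with (norm2 b / 2). intros t Ht.
    assert (H := young_t (/ t) a b ltac:(apply Rinv_0_lt_compat; lra)).
    rewrite Rinv_inv in H. rewrite <- Ea, Za in H. lra.
  - destruct (Req_dec (norm b) 0) as [Zb|Zb].
    + rewrite Zb, Rmult_0_r.
      apply le_of_forall_pos with (norm2 a / 2). intros t Ht.
      assert (H := young_t t a b Ht). rewrite <- Eb, Zb in H. lra.
    + assert (H := young_t (norm b / norm a) a b ltac:(apply Rdiv_lt_0_compat; lra)).
      rewrite <- Ea, <- Eb in H.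
      replace (norm b / norm a * (norm a * norm a) + / (norm b / norm a) * (norm b * norm b))
        with (2 * (norm a * norm b)) in H by (field; lra). lra.
Qed.

Lemma norm_scale_pos {d} s (v : Vec d) : 0 <= s -> norm (vscale s v) = s * norm v.
Proof. intros Hs. unfold norm. rewrite norm2_scale, sqrt_mult_alt, sqrt_square; nra. Qed.

Lemma abs_lower u : - Rabs u <= u.
Proof. assert (H := Rle_abs (- u)). rewrite Rabs_Ropp in H. lra. Qed.

Lemma ge_of_forall_pos a c : (forall t, 0 < t -> - (t * c) <= a) -> 0 <= a.
Proof. intros H. assert (- a <= 0); [|lra]. apply le_of_forall_pos with c. intros t Ht. specialize (H t Ht). lra. Qed.

Lemma sc_grad {d} (f : Vec d -> R) g mu :
  0 <= mu -> has_gradient f g -> strongly_convex mu f ->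
  forall x y, f x + inner (g x) (vsub y x) + mu / 2 * norm2 (vsub y x) <= f y.
Proof.
  intros Hmu Hg Hsc x y. set (v := vsub y x).
  assert (Hnv := norm_nonneg v). assert (HV := norm2_nonneg v).
  assert (0 <= f y - f x - inner (g x) v - mu / 2 * norm2 v); [|lra].
  apply ge_of_forall_pos with (norm v + mu / 2 * norm2 v). intros t Ht.
  set (eps := Rmin t (1/2)).
  assert (Heps : 0 < eps) by (apply Rmin_glb_lt; lra).
  assert (Het : eps <= t) by apply Rmin_l.
  assert (Heh : eps <= 1/2) by apply Rmin_r.
  destruct (Hg x eps Heps) as [delta [Hd Hdel]].
  set (s := Rmin eps (delta / (2 * (norm v + 1)))).
  assert (Hs0 : 0 < s) by (apply Rmin_glb_lt; [lra| apply Rdiv_lt_0_compat; lra]).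
  assert (Hse : s <= eps) by apply Rmin_l.
  assert (Hsd : s <= delta / (2 * (norm v + 1))) by apply Rmin_r.
  set (z := vadd (vscale s y) (vscale (1 - s) x)).
  assert (Ez : vsub z x = vscale s v) by (unfold z, v; vext).
  assert (Hnz : norm (vsub z x) = s * norm v) by (rewrite Ez; apply norm_scale_pos; lra).
  assert (Hlt : norm (vsub z x) < delta).
  { rewrite Hnz.
    assert (s * (2 * (norm v + 1)) <= delta).
    { apply Rmult_le_reg_r with (/ (2 * (norm v + 1))). apply Rinv_0_lt_compat; lra.
      rewrite Rmult_assoc, Rinv_r, Rmult_1_r; lra. }
    nra. }
  specialize (Hdel z Hlt).
  assert (Hlow := abs_lower (f z - f x - inner (g x) (vsub z x))).
  rewrite Ez, inner_scale_r in Hlow. rewrite Ez in Hdel. rewrite norm_scale_pos in Hdel by lra.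
  assert (Hsc' := Hsc y x s ltac:(lra)). fold z in Hsc'. fold v in Hsc'.
  assert (Hk : s * (inner (g x) v - eps * norm v) <= s * (f y - f x - mu / 2 * (1 - s) * norm2 v)).
  { rewrite inner_scale_r in Hdel. lra. }
  apply Rmult_le_reg_l in Hk; [|lra].
  assert (mu / 2 * s * norm2 v <= mu / 2 * t * norm2 v).
  { apply Rmult_le_compat_r; auto. apply Rmult_le_compat_l; lra. }
  assert (eps * norm v <= t * norm v) by (apply Rmult_le_compat_r; lra).
  nra.
Qed.

Lemma exists_nat_gt r : exists M : nat, (1 <= M)%nat /\ r < INR M.
Proof.
  destruct (archimed (Rmax r 0)) as [H1 _].
  exists (S (Z.to_nat (up (Rmax r 0)))). split; [lia|].
  rewrite S_INR, INR_IZR_INZ, Znat.Z2Nat.id.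
  - assert (r <= Rmax r 0) by apply Rmax_l. lra.
  - apply le_IZR. assert (0 <= Rmax r 0) by apply Rmax_r. lra.
Qed.

Lemma le_of_forall_nat a c : 0 <= c -> (forall M : nat, (1 <= M)%nat -> a <= c / INR M) -> a <= 0.
Proof.
  intros Hc H. apply le_of_forall_pos with c. intros t Ht.
  destruct (exists_nat_gt (/ t)) as [M [HM1 HM2]].
  assert (HM : 0 < INR M) by (apply lt_0_INR; lia).
  specialize (H M HM1).
  assert (c / INR M <= t * c); [|lra].
  unfold Rdiv. rewrite Rmult_comm. apply Rmult_le_compat_r; auto.
  apply Rlt_le. replace t with (/ / t) by (field; lra). apply Rinv_lt_contravar; auto.
  apply Rmult_lt_0_compat; auto. apply Rinv_0_lt_compat; auto.
Qed.

Lemma descent {d} (f : Vec d -> R) g L :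
  0 <= L ->
  (forall a b, f a + inner (g a) (vsub b a) <= f b) ->
  lipschitz_grad L g ->
  forall x y, f y <= f x + inner (g x) (vsub y x) + L / 2 * norm2 (vsub y x).
Proof.
  intros HL Hcv Hlip x y. set (v := vsub y x).
  assert (HV := norm2_nonneg v). assert (Hnv := norm_nonneg v).
  assert (f y - f x - inner (g x) v - L / 2 * norm2 v <= 0); [|lra].
  apply le_of_forall_nat with (L / 2 * norm2 v). apply Rmult_le_pos; lra.
  intros M HM. assert (HMp : 0 < INR M) by (apply lt_0_INR; lia).
  set (z := fun k : nat => vadd x (vscale (INR k / INR M) v)).
  assert (Hk : forall k : nat, f (z k) <= f x + INR k / INR M * inner (g x) v
                 + L * norm2 v * INR k * (INR k + 1) / (2 * (INR M * INR M))).
  { induction k.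
    - assert (E : z 0%nat = x) by (unfold z; apply functional_extensionality; intro; unfold vadd, vscale; simpl; field; lra).
      rewrite E. simpl. assert (0 * (0+1) = 0) by ring. unfold Rdiv. rewrite !Rmult_0_l. nra.
    - set (k' := S k).
      assert (E1 : vsub (z k) (z k') = vscale (- / INR M) v).
      { unfold z, k'. apply functional_extensionality; intro; unfold vadd, vsub, vscale. rewrite S_INR. field; lra. }
      assert (E2 : vsub (z k') x = vscale (INR k' / INR M) v).
      { unfold z, k'. apply functional_extensionality; intro; unfold vadd, vsub, vscale. ring. }
      assert (Hc := Hcv (z k') (z k)). rewrite E1, inner_scale_r in Hc.
      assert (Hcs := cauchy_schwarz (vsub (g (z k')) (g x)) v).
      assert (Hl := Hlip (z k') x). rewrite E2, norm_scale_pos in Hl by (apply Rmult_le_pos; [apply pos_INR | left; apply Rinv_0_lt_compat; lra]).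
      assert (Hl2 : norm (vsub (g (z k')) (g x)) * norm v <= L * (INR k' / INR M * norm v) * norm v)
        by (apply Rmult_le_compat_r; auto).
      rewrite inner_sub_l in Hcs.
      assert (Hsq := norm_sq v).
      assert (Hin : inner (g (z k')) v <= inner (g x) v + L * (INR k' / INR M) * norm2 v).
      { rewrite <- Hsq. lra. }
      assert (Hin2 : / INR M * inner (g (z k')) v <= / INR M * (inner (g x) v + L * (INR k' / INR M) * norm2 v)).
      { apply Rmult_le_compat_l; auto. left; apply Rinv_0_lt_compat; lra. }
      unfold k' in *. rewrite S_INR in *.
      assert (f (z (S k)) <= f (z k) + / INR M * (inner (g x) v + L * ((INR k + 1) / INR M) * norm2 v)) by lra.
      assert (Eq : f x + INR k / INR M * inner (g x) v + L * norm2 v * INR k * (INR k + 1) / (2 * (INR M * INR M))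
                   + / INR M * (inner (g x) v + L * ((INR k + 1) / INR M) * norm2 v)
                   = f x + (INR k + 1) / INR M * inner (g x) v +
                     L * norm2 v * (INR k + 1) * (INR k + 1 + 1) / (2 * (INR M * INR M))) by (field; lra).
      lra. }
  specialize (Hk M).
  assert (EM : z M = y) by (unfold z, v; apply functional_extensionality; intro; unfold vadd, vsub, vscale; field; lra).
  rewrite EM in Hk.
  replace (INR M / INR M) with 1 in Hk by (field; lra).
  replace (L * norm2 v * INR M * (INR M + 1) / (2 * (INR M * INR M))) with (L / 2 * norm2 v + L / 2 * norm2 v / INR M) in Hk by (field; lra).
  lra.
Qed.

Lemma vsub_swap {d} (x y : Vec d) : vsub x y = vscale (-1) (vsub y x).
Proof. vext. Qed.

Lemma cocoercive {d} (f : Vec d -> R) g m L :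
  m <= L ->
  (forall a b, f a + inner (g a) (vsub b a) + m / 2 * norm2 (vsub b a) <= f b) ->
  (forall a b, f b <= f a + inner (g a) (vsub b a) + L / 2 * norm2 (vsub b a)) ->
  forall x y,
    norm2 (vsub (vsub (g y) (g x)) (vscale m (vsub y x)))
      <= 2 * (L - m) * (f y - f x - inner (g x) (vsub y x) - m / 2 * norm2 (vsub y x)).
Proof.
  intros HmL Hlo Hup x y.
  set (w := vsub (vsub (g y) (g x)) (vscale m (vsub y x))).
  set (E := f y - f x - inner (g x) (vsub y x) - m / 2 * norm2 (vsub y x)).
  assert (HW : norm2 w = inner (g y) w - inner (g x) w - m * inner (vsub y x) w).
  { unfold norm2 at 1. unfold w at 1. rewrite !inner_sub_l, inner_scale_l, (inner_sub_l y x w). reflexivity. }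
  assert (Key : forall t, 0 <= t -> t * norm2 w - (L - m) * t * t / 2 * norm2 w <= E).
  { intros t Ht. set (z := vsub y (vscale t w)).
    assert (H1 := Hlo x z). assert (H2 := Hup y z).
    assert (Ezx : vsub z x = vsub (vsub y x) (vscale t w)) by (unfold z; vext).
    assert (Ezy : vsub z y = vscale (- t) w) by (unfold z; vext).
    rewrite Ezx, inner_sub_r, inner_scale_r, norm2_sub, norm2_scale, inner_scale_r in H1.
    rewrite Ezy, inner_scale_r, norm2_scale in H2.
    unfold E. nra. }
  assert (HWn := norm2_nonneg w).
  destruct (Req_dec L m) as [Eq|Ne].
  - rewrite Eq, Rminus_diag, Rmult_0_r, Rmult_0_l.
    apply le_of_forall_pos with E. intros t Ht.
    specialize (Key (/ t) ltac:(left; apply Rinv_0_lt_compat; lra)).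
    rewrite Eq, Rminus_diag in Key.
    apply Rmult_le_reg_l with (/ t). apply Rinv_0_lt_compat; lra.
    replace (/ t * (t * E)) with E by (field; lra). lra.
  - assert (Hp : 0 < L - m) by lra.
    specialize (Key (/ (L - m)) ltac:(left; apply Rinv_0_lt_compat; lra)).
    replace (/ (L - m) * norm2 w - (L - m) * / (L - m) * / (L - m) / 2 * norm2 w)
      with (/ (2 * (L - m)) * norm2 w) in Key by (field; lra).
    apply Rmult_le_reg_l with (/ (2 * (L - m))). apply Rinv_0_lt_compat; lra.
    replace (/ (2 * (L - m)) * (2 * (L - m) * E)) with E by (field; lra). lra.
Qed.

Lemma lemma1 {d} (f : Vec d -> R) g mu L :
  mu <= L ->
  (forall a b, f a + inner (g a) (vsub b a) + mu / 2 * norm2 (vsub b a) <= f b) ->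
  (forall a b, f b <= f a + inner (g a) (vsub b a) + L / 2 * norm2 (vsub b a)) ->
  forall x y,
    norm2 (vsub (g x) (g y)) + L * mu * norm2 (vsub x y)
      <= 2 * L * (f y - f x - inner (g x) (vsub y x)) + 2 * mu * (f x - f y - inner (g y) (vsub x y)).
Proof.
  intros HmL Hlo Hup x y.
  assert (H := cocoercive f g mu L HmL Hlo Hup x y).
  rewrite norm2_sub, norm2_scale, inner_scale_r, inner_sub_l in H.
  rewrite (vsub_swap (g x)), norm2_scale, (vsub_swap x y), norm2_scale, inner_scale_r.
  lra.
Qed.

Lemma mu_le_L {d} (f : Vec (S d) -> R) g mu L :
  0 <= mu -> has_gradient f g -> strongly_convex mu f -> lipschitz_grad L g -> mu <= L.
Proof.
  intros Hmu Hg Hsc Hl.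
  set (x := fun _ : Fin.t (S d) => 0). set (y := fun _ : Fin.t (S d) => 1).
  assert (H1 := sc_grad f g mu Hmu Hg Hsc x y).
  assert (H2 := sc_grad f g mu Hmu Hg Hsc y x).
  assert (HV : norm2 (vsub y x) = INR (S d)).
  { unfold norm2, inner, vsub, x, y. rewrite fsum_const. ring. }
  assert (Hpos : 0 < INR (S d)) by (apply lt_0_INR; lia).
  rewrite (vsub_swap x y), norm2_scale, inner_scale_r in H2.
  assert (Hcs := cauchy_schwarz (vsub (g y) (g x)) (vsub y x)).
  rewrite inner_sub_l in Hcs.
  assert (Hlip := Hl y x).
  assert (Hn := norm_nonneg (vsub y x)). assert (Hsq := norm_sq (vsub y x)).
  assert (norm (vsub (g y) (g x)) * norm (vsub y x) <= L * norm (vsub y x) * norm (vsub y x))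
    by (apply Rmult_le_compat_r; auto).
  assert (mu * INR (S d) <= L * INR (S d)) by nra.
  apply Rmult_le_reg_r with (INR (S d)); auto.
Qed.

Lemma le_of_forall_small a c : 0 <= c -> (forall t, 0 < t < 1 -> a <= t * c) -> a <= 0.
Proof.
  intros Hc H. apply le_of_forall_pos with c. intros t Ht.
  destruct (Rlt_dec t (1/2)) as [Hl|Hl].
  - apply H; lra.
  - assert (a <= 1/2 * c) by (apply H; lra). nra.
Qed.

Lemma prox_vi {d} (h : Vec d -> ER) gam P :
  0 < gam -> convex_ext h -> is_prox h gam P ->
  forall y u ru, h u = ERfin ru -> exists rz, h (P y) = ERfin rz /\
     rz - ru <= / gam * inner (vsub (P y) y) (vsub u (P y)).
Proof.
  intros Hg Hc Hp y u ru Hu. set (z := P y).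
  assert (H0 := Hp y u). rewrite Hu in H0. fold z in H0.
  destruct (h z) as [rz|] eqn:Hz; [|simpl in H0; contradiction].
  exists rz. split; auto.
  set (W := norm2 (vsub u z)). assert (HW := norm2_nonneg (vsub u z)).
  assert (rz - ru - / gam * inner (vsub z y) (vsub u z) <= 0); [|lra].
  apply le_of_forall_small with (/ (2 * gam) * W).
  { apply Rmult_le_pos; auto. left; apply Rinv_0_lt_compat; lra. }
  intros t Ht.
  set (zt := vadd (vscale t u) (vscale (1 - t) z)).
  assert (Hct := Hc u z t Ht). fold zt in Hct. rewrite Hu, Hz in Hct.
  assert (Hpt := Hp y zt). fold z in Hpt. rewrite Hz in Hpt.
  destruct (h zt) as [rt|]; [|simpl in Hct; contradiction]. simpl in Hct, Hpt.
  assert (E : vsub zt y = vadd (vsub z y) (vscale t (vsub u z))) by (unfold zt; vext).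
  rewrite E, norm2_add, norm2_scale, inner_scale_r in Hpt. fold W in Hpt.
  assert (Hk : t * (rz - ru) <= t * (/ gam * inner (vsub z y) (vsub u z) + t * (/ (2 * gam) * W))).
  { assert (Eq : / (2 * gam) * (norm2 (vsub z y) + 2 * (t * inner (vsub z y) (vsub u z)) + t * t * W)
       = / (2 * gam) * norm2 (vsub z y) + t * (/ gam * inner (vsub z y) (vsub u z) + t * (/ (2 * gam) * W)))
      by (field; lra). lra. }
  apply Rmult_le_reg_l in Hk; lra.
Qed.

Lemma min_vi {d} (h : Vec d -> ER) (fa : Vec d -> R) (gstar : Vec d) L xs :
  0 <= L -> proper_ext h -> convex_ext h ->
  (forall z, fa z <= fa xs + inner gstar (vsub z xs) + L / 2 * norm2 (vsub z xs)) ->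
  is_minimiser (fun x => ER_plus_R (h x) (fa x)) xs ->
  exists hs, h xs = ERfin hs /\
    forall u ru, h u = ERfin ru -> hs - ru <= inner gstar (vsub u xs).
Proof.
  intros HL [x0 Hx0] Hc Hf Hm.
  assert (H0 := Hm x0). simpl in H0.
  destruct (h x0) as [r0|]; [|congruence].
  destruct (h xs) as [hs|] eqn:Hxs; [|simpl in H0; contradiction].
  exists hs. split; auto. intros u ru Hu.
  assert (HW := norm2_nonneg (vsub u xs)). set (W := norm2 (vsub u xs)) in *.
  assert (hs - ru - inner gstar (vsub u xs) <= 0); [|lra].
  apply le_of_forall_small with (L / 2 * W). { apply Rmult_le_pos; lra. }
  intros t Ht.
  set (zt := vadd (vscale t u) (vscale (1 - t) xs)).
  assert (Hct := Hc u xs t Ht). fold zt in Hct. rewrite Hu, Hxs in Hct.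
  assert (Hmt := Hm zt). simpl in Hmt. rewrite Hxs in Hmt.
  destruct (h zt) as [rt|]; [|simpl in Hct; contradiction]. simpl in Hct, Hmt.
  assert (Hft := Hf zt).
  assert (E : vsub zt xs = vscale t (vsub u xs)) by (unfold zt; vext).
  rewrite E, norm2_scale, inner_scale_r in Hft. fold W in Hft.
  assert (Hk : t * (hs - ru - inner gstar (vsub u xs)) <= t * (t * (L / 2 * W))) by nra.
  apply Rmult_le_reg_l in Hk; lra.
Qed.

Lemma prox_firm {d} (h : Vec d -> ER) gam P xs hs gstar :
  0 < gam -> convex_ext h -> is_prox h gam P -> h xs = ERfin hs ->
  (forall u ru, h u = ERfin ru -> hs - ru <= inner gstar (vsub u xs)) ->
  forall y, norm2 (vsub (P y) xs) <= norm2 (vsub y (vsub xs (vscale gam gstar))).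
Proof.
  intros Hg Hc Hp Hxs Hmin y.
  destruct (prox_vi h gam P Hg Hc Hp y xs hs Hxs) as [rz [Hz H1]].
  assert (H2 := Hmin (P y) rz Hz).
  set (e := vsub (P y) xs) in *.
  assert (E1 : vsub (P y) y = vsub e (vsub y xs)) by (unfold e; vext).
  assert (E2 : vsub xs (P y) = vscale (-1) e) by (unfold e; vext).
  assert (E3 : vsub y (vsub xs (vscale gam gstar)) = vadd (vsub y xs) (vscale gam gstar)) by vext.
  rewrite E1, E2, inner_scale_r, inner_sub_l in H1.
  assert (H3 : 0 <= - norm2 e + inner (vsub y xs) e + gam * inner gstar e).
  { assert (Hk : 0 <= / gam * (- (inner e e - inner (vsub y xs) e)) + inner gstar e) by lra.
    apply Rmult_le_compat_l with (r := gam) in Hk; [|lra].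
    rewrite Rmult_0_r, Rmult_plus_distr_l, <- Rmult_assoc, Rinv_r, Rmult_1_l in Hk by lra.
    unfold norm2. lra. }
  rewrite E3. assert (Hy := young (vadd (vsub y xs) (vscale gam gstar)) e).
  rewrite inner_add_l, inner_scale_l in Hy. lra.
Qed.

Definition avg (n : nat) (F : Fin.t n -> R) : R := / INR n * fsum n F.

Lemma avg_add n F G : avg n (fun i => F i + G i) = avg n F + avg n G.
Proof. unfold avg. rewrite fsum_add. ring. Qed.
Lemma avg_sub n F G : avg n (fun i => F i - G i) = avg n F - avg n G.
Proof. unfold avg. rewrite fsum_sub. ring. Qed.
Lemma avg_scal n c F : avg n (fun i => c * F i) = c * avg n F.
Proof. unfold avg. rewrite fsum_scal. ring. Qed.
Lemma avg_const n c : (0 < n)%nat -> avg n (fun _ => c) = c.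
Proof. intros Hn. unfold avg. rewrite fsum_const. field. apply not_0_INR. lia. Qed.
Lemma avg_le n F G : (forall i, F i <= G i) -> avg n F <= avg n G.
Proof.
  intros H. unfold avg. apply Rmult_le_compat_l.
  - destruct n. { simpl. rewrite Rinv_0. lra. } left. apply Rinv_0_lt_compat. apply lt_0_INR. lia.
  - apply fsum_le; auto.
Qed.
Lemma avg_ext n F G : (forall i, F i = G i) -> avg n F = avg n G.
Proof. intros H. unfold avg. f_equal. apply fsum_ext; auto. Qed.
Lemma inner_vavg_l' {d n} (X : Fin.t n -> Vec d) y : inner (vavg X) y = avg n (fun j => inner (X j) y).
Proof. apply inner_vavg_l. Qed.

Lemma expect_le n k : forall (X Y : list (Fin.t n) -> R), (forall s, X s <= Y s) -> expect n k X <= expect n k Y.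
Proof.
  induction k; intros X Y H; simpl; auto.
  apply (avg_le n (fun j => expect n k (fun s => X (j :: s))) (fun j => expect n k (fun s => Y (j :: s)))).
  intros j. apply IHk. auto.
Qed.

Lemma expect_zero n k : expect n k (fun _ => 0) = 0.
Proof.
  induction k; simpl; auto. rewrite IHk. rewrite fsum_const. ring.
Qed.

Definition Dfun {d n} (fs : Fin.t n -> Vec d -> R) (gs : Fin.t n -> Vec d -> Vec d) xs i y :=
  fs i y - fs i xs - inner (gs i xs) (vsub y xs).

Definition Psi {d n} (fs : Fin.t n -> Vec d -> R) (gs : Fin.t n -> Vec d -> Vec d) xs kappa
  (st : saga_state d n) : R :=
  norm2 (vsub (fst st) xs) + kappa * avg n (fun i => Dfun fs gs xs i (snd st i)).

Lemma neg2_inner {d} beta (p q : Vec d) : 0 < beta -> - 2 * inner p q <= beta * norm2 p + / beta * norm2 q.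
Proof.
  intros Hb. assert (H := young_beta beta p q Hb). rewrite norm2_sub in H.
  replace ((1 + beta) * norm2 p + (1 + / beta) * norm2 q) with
    (norm2 p + norm2 q + (beta * norm2 p + / beta * norm2 q)) in H by ring. lra.
Qed.

Lemma saga_step_bound {d n} (Hn : (0 < n)%nat) (fs : Fin.t n -> Vec d -> R)
  (gs : Fin.t n -> Vec d -> Vec d) (P : Vec d -> Vec d) xs mu L gam beta kappa :
  0 < gam -> 0 < beta -> 0 <= mu -> 0 <= kappa -> 0 <= L ->
  gam * (1 + beta) * L = 1 ->
  0 <= - (kappa / INR n) + 2 * (gam * gam) * (1 + beta) * (L - mu) + 2 * (gam * gam) * beta * mu ->
  0 <= kappa / INR n - gam * mu * kappa - 2 * L * (gam * gam) * (1 + / beta) ->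
  (forall y, norm2 (vsub (P y) xs) <= norm2 (vsub y (vsub xs (vscale gam (vavg (fun i => gs i xs)))))) ->
  (forall i a b, fs i a + inner (gs i a) (vsub b a) + mu / 2 * norm2 (vsub b a) <= fs i b) ->
  (forall i x, norm2 (vsub (gs i x) (gs i xs)) + L * mu * norm2 (vsub x xs)
     <= 2 * L * (fs i xs - fs i x - inner (gs i x) (vsub xs x))
        + 2 * mu * (fs i x - fs i xs - inner (gs i xs) (vsub x xs))) ->
  (forall i y, norm2 (vsub (gs i y) (gs i xs)) <= 2 * L * Dfun fs gs xs i y) ->
  forall st, avg n (fun j => Psi fs gs xs kappa (saga_step gs gam P st j))
             <= (1 - gam * mu) * Psi fs gs xs kappa st.
Proof.
  intros Hg Hb Hmu Hk HL Cb CD Cp Hfirm HF1 HL1 HT3 [x phi].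
  assert (HN : 0 < INR n) by (apply lt_0_INR; lia).
  set (gstar := vavg (fun i => gs i xs)) in *.
  set (v := vsub x xs).
  set (a := fun j => vsub (gs j x) (gs j xs)).
  set (abar := vavg a).
  set (b := fun j => vsub (gs j (phi j)) (gs j xs)).
  set (bbar := vsub (vavg (fun i => gs i (phi i))) gstar).
  set (c := fun j => vsub (b j) bbar).
  set (Dl := fun j => vsub (a j) (c j)).
  set (Dx := avg n (fun i => Dfun fs gs xs i x)).
  set (Dp := avg n (fun i => Dfun fs gs xs i (phi i))).
  assert (K0 : forall y, avg n (fun j => inner (b j) y) = inner bbar y).
  { intros y. unfold bbar, gstar. rewrite inner_sub_l, !inner_vavg_l'. rewrite <- avg_sub.
    apply avg_ext. intros j. unfold b. rewrite inner_sub_l. reflexivity. }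
  assert (Kc : forall y, avg n (fun j => inner y (c j)) = 0).
  { intros y. rewrite (avg_ext n _ (fun j => inner (b j) y - inner bbar y)).
    - rewrite avg_sub, K0, avg_const by auto. ring.
    - intros j. unfold c. rewrite inner_sub_r, !(inner_comm y). reflexivity. }
  assert (Hj : forall j, Psi fs gs xs kappa (saga_step gs gam P (x, phi) j)
     <= norm2 (vsub v (vscale gam (Dl j))) + kappa * (Dp + / INR n * (Dfun fs gs xs j x - Dfun fs gs xs j (phi j)))).
  { intros j. unfold Psi, saga_step. simpl fst. simpl snd.
    destruct (Fin.eq_dec j j) as [_|C]; [|congruence].
    apply Rplus_le_compat.
    - eapply Rle_trans; [apply Hfirm|]. right. f_equal.
      unfold v, Dl, a, c, b, bbar, gstar. vext.
    - right. f_equal.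
      rewrite (avg_ext n _ (fun i => Dfun fs gs xs i (phi i) +
          (if Fin.eq_dec i j then Dfun fs gs xs i x - Dfun fs gs xs i (phi i) else 0))).
      + rewrite avg_add. unfold Dp. f_equal. unfold avg. rewrite fsum_delta. reflexivity.
      + intros i. destruct (Fin.eq_dec i j); [subst; ring|ring]. }
  eapply Rle_trans; [apply avg_le; exact Hj|].
  rewrite avg_add, avg_scal, avg_add, avg_const, avg_scal, avg_sub by auto.
  fold Dx. fold Dp.
  rewrite (avg_ext n _ (fun j => norm2 v - 2 * gam * inner v (Dl j) + gam * gam * norm2 (Dl j))).
  2:{ intros j. rewrite norm2_sub, norm2_scale, inner_scale_r. ring. }
  rewrite avg_add, avg_sub, avg_const, !avg_scal by auto.
  set (Pp := avg n (fun j => inner (a j) v)).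
  set (A := avg n (fun j => norm2 (a j))).
  set (B := avg n (fun j => norm2 (b j))).
  set (G := norm2 abar).
  assert (HP : avg n (fun j => inner v (Dl j)) = Pp).
  { unfold Dl. rewrite (avg_ext n _ (fun j => inner (a j) v - inner v (c j))).
    - rewrite avg_sub, Kc. unfold Pp. ring.
    - intros j. rewrite inner_sub_r, inner_comm. reflexivity. }
  rewrite HP.
  assert (HS : avg n (fun j => norm2 (Dl j)) <= (1 + beta) * A - beta * G + (1 + / beta) * B).
  { assert (Hjj : forall j, norm2 (Dl j) <=
       norm2 (a j) + beta * (norm2 (a j) - 2 * inner (a j) abar + G)
       + (1 + / beta) * (norm2 (b j) - 2 * inner (b j) bbar + norm2 bbar) - 2 * inner abar (c j)).
    { intros j. set (cc := c j).
      assert (E0 : norm2 (Dl j) = norm2 (a j) - 2 * inner (a j) cc + norm2 cc) by (apply norm2_sub).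
      assert (E1 : inner (a j) cc = inner (vsub (a j) abar) cc + inner abar cc)
        by (rewrite inner_sub_l; ring).
      assert (H1 := neg2_inner beta (vsub (a j) abar) cc Hb).
      assert (E2 : norm2 (vsub (a j) abar) = norm2 (a j) - 2 * inner (a j) abar + G) by (apply norm2_sub).
      assert (E3 : norm2 cc = norm2 (b j) - 2 * inner (b j) bbar + norm2 bbar) by (apply norm2_sub).
      rewrite E2 in H1. rewrite E0, E1. rewrite <- E3. lra. }
    eapply Rle_trans; [apply avg_le; exact Hjj|].
    rewrite !avg_sub, !avg_add, !avg_scal, !avg_add, !avg_sub, !avg_scal, !avg_const by auto.
    rewrite Kc. fold A B.
    assert (EG : avg n (fun j => inner (a j) abar) = G) by (unfold G, norm2, abar; rewrite inner_vavg_l'; reflexivity).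
    rewrite EG, K0. assert (Hbb := norm2_nonneg bbar).
    assert (0 <= / beta) by (left; apply Rinv_0_lt_compat; lra).
    fold (norm2 bbar). nra. }
  unfold Psi. simpl fst. simpl snd. fold v Dp.
  set (V := norm2 v).
  assert (HV : 0 <= V) by apply norm2_nonneg.
  assert (Hvs : forall i, Dfun fs gs xs i x = fs i x - fs i xs - inner (gs i xs) v) by (intros; reflexivity).
  assert (H3 : A <= 2 * L * (Pp - Dx) + 2 * mu * Dx - L * mu * V).
  { assert (Hi : forall i, norm2 (a i) <= 2 * L * (inner (a i) v - Dfun fs gs xs i x) + 2 * mu * Dfun fs gs xs i x - L * mu * V).
    { intros i. assert (H := HL1 i x). rewrite (vsub_swap xs x), inner_scale_r in H. fold v V in H.
      unfold a. rewrite inner_sub_l. rewrite Hvs. lra. }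
    eapply Rle_trans; [apply avg_le; exact Hi|].
    rewrite avg_sub, avg_add, !avg_scal, avg_sub, avg_const by auto. fold Pp Dx. lra. }
  assert (H4 : 2 * mu * Dx <= G).
  { assert (Hi : forall i, Dfun fs gs xs i x <= inner (a i) v - mu / 2 * V).
    { intros i. assert (H := HF1 i x xs). rewrite (vsub_swap xs x), inner_scale_r, norm2_scale in H. fold v V in H.
      unfold a. rewrite inner_sub_l. rewrite Hvs. lra. }
    assert (Hav : Dx <= Pp - mu / 2 * V).
    { eapply Rle_trans; [apply avg_le; exact Hi|]. rewrite avg_sub, avg_const by auto. fold Pp. lra. }
    assert (EP : Pp = inner abar v) by (unfold abar; rewrite inner_vavg_l'; reflexivity).
    assert (Hy := norm2_nonneg (vsub abar (vscale mu v))).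
    rewrite norm2_sub, norm2_scale, inner_scale_r in Hy. fold G V in Hy. nra. }
  assert (H2 : B <= 2 * L * Dp).
  { unfold B, Dp. rewrite <- avg_scal. apply avg_le. intros i. apply HT3. }
  assert (HD0 : forall y i, 0 <= Dfun fs gs xs i y).
  { intros y i. assert (H := HF1 i xs y). assert (H0 := norm2_nonneg (vsub y xs)). unfold Dfun. nra. }
  assert (HDx : 0 <= Dx) by (unfold Dx; rewrite <- (avg_const n 0) by auto; apply avg_le; auto).
  assert (HDp : 0 <= Dp) by (unfold Dp; rewrite <- (avg_const n 0) by auto; apply avg_le; auto).
  set (S := avg n (fun i => norm2 (Dl i))) in *.
  assert (Hinvb : 0 <= / beta) by (left; apply Rinv_0_lt_compat; lra).
  assert (T1 : gam * gam * S <= gam * gam * ((1 + beta) * A - beta * G + (1 + / beta) * B))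
    by (apply Rmult_le_compat_l; nra).
  assert (T2 : gam * gam * (1 + / beta) * B <= gam * gam * (1 + / beta) * (2 * L * Dp))
    by (apply Rmult_le_compat_l; nra).
  assert (T3 : gam * gam * (1 + beta) * A <= gam * gam * (1 + beta) * (2 * L * (Pp - Dx) + 2 * mu * Dx - L * mu * V))
    by (apply Rmult_le_compat_l; nra).
  assert (T4 : gam * gam * beta * (2 * mu * Dx) <= gam * gam * beta * G)
    by (apply Rmult_le_compat_l; nra).
  assert (T5 := Rmult_le_pos _ _ CD HDx).
  assert (T6 := Rmult_le_pos _ _ Cp HDp).
  assert (E1 : gam * gam * (1 + beta) * (2 * L * Pp) = 2 * gam * Pp)
    by (transitivity (2 * gam * Pp * (gam * (1 + beta) * L)); [ring| rewrite Cb; ring]).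
  assert (E2 : gam * gam * (1 + beta) * (L * mu * V) = gam * mu * V)
    by (transitivity (gam * mu * V * (gam * (1 + beta) * L)); [ring| rewrite Cb; ring]).
  unfold Rdiv in *.
  lra.
Qed.

Lemma saga_iter {d n} (Hn : (0 < n)%nat) (fs : Fin.t n -> Vec d -> R) gs gam P xs kappa rho :
  0 <= rho ->
  (forall st, avg n (fun j => Psi fs gs xs kappa (saga_step gs gam P st j)) <= rho * Psi fs gs xs kappa st) ->
  forall k st, expect n k (fun s => Psi fs gs xs kappa (saga_run gs gam P s st)) <= rho ^ k * Psi fs gs xs kappa st.
Proof.
  intros Hr Hs k. induction k; intros st.
  - simpl. lra.
  - change (avg n (fun j => expect n k (fun s => Psi fs gs xs kappa (saga_run gs gam P s (saga_step gs gam P st j))))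
       <= rho ^ S k * Psi fs gs xs kappa st).
    eapply Rle_trans.
    { apply avg_le. intros j. apply IHk. }
    rewrite avg_scal. simpl pow.
    replace (rho * rho ^ k * Psi fs gs xs kappa st) with (rho ^ k * (rho * Psi fs gs xs kappa st)) by ring.
    apply Rmult_le_compat_l; [apply pow_le; auto|].
    apply Hs.
Qed.

Lemma poly_ineq mu L p : 0 < mu -> mu <= L -> mu <= p ->
  0 <= (2 * (p + L) - mu) * (p + 2 * L) * (2 * p + L) - 4 * (p + L) * (p + L) * L.
Proof.
  intros H1 H2 H3.
  assert (HK : 0 <= (p + 2 * L) * (2 * p + L)) by nra.
  destruct (Rle_dec p L) as [Hp|Hp].
  - assert (HX : (2 * (p + L) - p) * ((p + 2 * L) * (2 * p + L)) <= (2 * (p + L) - mu) * ((p + 2 * L) * (2 * p + L)))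
      by (apply Rmult_le_compat_r; lra).
    assert (0 <= p) by lra.
    assert (0 <= 2 * p * p * p + 5 * p * p * L + 4 * p * L * L) by (assert (0 <= p * p) by nra; nra).
    nra.
  - assert (HX : (2 * (p + L) - L) * ((p + 2 * L) * (2 * p + L)) <= (2 * (p + L) - mu) * ((p + 2 * L) * (2 * p + L)))
      by (apply Rmult_le_compat_r; lra).
    assert (0 <= 4 * p * p * p + 8 * p * p * L + p * L * L - 2 * L * L * L).
    { assert (L <= p) by lra. assert (0 < L) by lra.
      assert (L * L * L <= p * p * p) by (apply Rmult_le_compat; try nra; apply Rmult_le_compat; lra).
      assert (L * L * L <= p * p * L) by (apply Rmult_le_compat_r; nra).
      nra. }
    nra.
Qed.

Theorem corollary1 (d n : nat) (fs : Fin.t n -> Vec d -> R)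
  (gs : Fin.t n -> Vec d -> Vec d) (h : Vec d -> ER) (mu L : R)
  (P : Vec d -> Vec d) (x0 xs : Vec d) :
  (0 < n)%nat -> 0 < mu ->
  (forall i, has_gradient (fs i) (gs i)) ->
  (forall i, convex_fun (fs i)) ->
  (forall i, strongly_convex mu (fs i)) ->
  (forall i, lipschitz_grad L (gs i)) ->
  proper_ext h -> convex_ext h -> closed_ext h ->
  is_prox h (/ (2 * (mu * INR n + L))) P ->
  is_minimiser (fun x => ER_plus_R (h x) (/ INR n * fsum n (fun i => fs i x))) xs ->
  forall k : nat,
    expect n k (fun s =>
      norm2 (vsub (fst (saga_run gs (/ (2 * (mu * INR n + L))) P s (saga_init x0))) xs))
    <= (1 - mu / (2 * (mu * INR n + L))) ^ k *
       (norm2 (vsub x0 xs)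
        + INR n / (mu * INR n + L) *
          (/ INR n * fsum n (fun i => fs i x0)
           - inner (vavg (fun i => gs i xs)) (vsub x0 xs)
           - / INR n * fsum n (fun i => fs i xs))).
Proof.
  intros Hn Hmu Hgrad Hcvx Hsc Hlip Hprop Hcvxh Hclosed Hprox Hmin k.
  destruct d as [|d'].
  - assert (E : x0 = xs) by (apply functional_extensionality; intro i; apply (Fin.case0 (fun _ => _) i)).
    subst x0.
    eapply Rle_trans.
    { apply (expect_le n k _ (fun _ => 0)). intros s. unfold norm2, inner. simpl. lra. }
    rewrite expect_zero.
    unfold norm2, inner. simpl fsum.
    replace (0 + INR n / (mu * INR n + L) *
      (/ INR n * fsum n (fun i => fs i xs) - 0 - / INR n * fsum n (fun i => fs i xs))) with 0 by ring.
    lra.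
  - set (N := INR n) in *.
    assert (HN1 : 1 <= N) by (apply (le_INR 1 n); lia).
    assert (Hi0 : exists i : Fin.t n, True) by (destruct n; [lia| exists Fin.F1; auto]).
    destruct Hi0 as [i0 _].
    assert (HmuL : mu <= L) by (apply (mu_le_L (fs i0) (gs i0) mu L); auto; lra).
    assert (HF1 : forall i a b, fs i a + inner (gs i a) (vsub b a) + mu / 2 * norm2 (vsub b a) <= fs i b)
      by (intros; apply sc_grad; auto; lra).
    assert (HF0 : forall i a b, fs i a + inner (gs i a) (vsub b a) <= fs i b).
    { intros i a b. assert (H := HF1 i a b). assert (H0 := norm2_nonneg (vsub b a)). nra. }
    assert (HDL : forall i a b, fs i b <= fs i a + inner (gs i a) (vsub b a) + L / 2 * norm2 (vsub b a))
      by (intros; apply descent; auto; lra).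
    set (gstar := vavg (fun i => gs i xs)).
    set (fa := fun x => / N * fsum n (fun i => fs i x)).
    assert (Hfa : forall z, fa z <= fa xs + inner gstar (vsub z xs) + L / 2 * norm2 (vsub z xs)).
    { intros z. change (avg n (fun i => fs i z) <= avg n (fun i => fs i xs) + inner gstar (vsub z xs) + L / 2 * norm2 (vsub z xs)).
      unfold gstar. rewrite inner_vavg_l'.
      rewrite <- (avg_const n (L / 2 * norm2 (vsub z xs))) by auto.
      rewrite <- !avg_add. apply avg_le. intros i. apply HDL. }
    assert (HQ : 0 < mu * N + L) by nra.
    set (gam := / (2 * (mu * N + L))) in *.
    assert (Hg : 0 < gam) by (apply Rinv_0_lt_compat; lra).
    destruct (min_vi h fa gstar L xs ltac:(lra) Hprop Hcvxh Hfa Hmin) as [hs [Hhs Hmin']].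
    assert (Hfirm := prox_firm h gam P xs hs gstar Hg Hcvxh Hprox Hhs Hmin').
    assert (HL1 : forall i x, norm2 (vsub (gs i x) (gs i xs)) + L * mu * norm2 (vsub x xs)
     <= 2 * L * (fs i xs - fs i x - inner (gs i x) (vsub xs x))
        + 2 * mu * (fs i x - fs i xs - inner (gs i xs) (vsub x xs))).
    { intros i x. apply lemma1; auto. }
    assert (HT3 : forall i y, norm2 (vsub (gs i y) (gs i xs)) <= 2 * L * Dfun fs gs xs i y).
    { intros i y. assert (H := cocoercive (fs i) (gs i) 0 L ltac:(lra) ltac:(intros; rewrite Rdiv_0_l, Rmult_0_l, Rplus_0_r; apply HF0) (HDL i) xs y).
      assert (E : vsub (vsub (gs i y) (gs i xs)) (vscale 0 (vsub y xs)) = vsub (gs i y) (gs i xs)) by vext.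
      rewrite E in H. unfold Dfun. rewrite Rdiv_0_l, Rmult_0_l, Rminus_0_r, Rminus_0_r in H. exact H. }
    set (beta := (2 * mu * N + L) / L).
    assert (HL : 0 < L) by lra.
    assert (Hb : 0 < beta) by (apply Rdiv_lt_0_compat; nra).
    set (kappa := 2 * gam * N * (1 - gam * mu)).
    assert (Hgm : gam * mu < 1).
    { unfold gam. apply Rmult_lt_reg_l with (2 * (mu * N + L)); [lra|].
      rewrite <- Rmult_assoc, Rinv_r by lra. nra. }
    assert (Hk : 0 <= kappa) by (unfold kappa; assert (0 <= N) by lra; apply Rmult_le_pos; [nra|lra]).
    assert (Cb : gam * (1 + beta) * L = 1) by (unfold gam, beta; field; lra).
    assert (CD : 0 <= - (kappa / N) + 2 * (gam * gam) * (1 + beta) * (L - mu) + 2 * (gam * gam) * beta * mu).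
    { right. unfold kappa, beta, gam. field. lra. }
    assert (Cp : 0 <= kappa / N - gam * mu * kappa - 2 * L * (gam * gam) * (1 + / beta)).
    { assert (Hpi := poly_ineq mu L (mu * N) Hmu HmuL ltac:(nra)).
      replace (kappa / N - gam * mu * kappa - 2 * L * (gam * gam) * (1 + / beta))
        with (((2 * (mu * N + L) - mu) * (mu * N + 2 * L) * (2 * (mu * N) + L) - 4 * (mu * N + L) * (mu * N + L) * L)
              / (4 * (mu * N + L) * (mu * N + L) * (mu * N + L) * (2 * (mu * N) + L))).
      2:{ unfold kappa, beta, gam. field. repeat split; nra. }
      unfold Rdiv. apply Rmult_le_pos; auto. left. apply Rinv_0_lt_compat. repeat apply Rmult_lt_0_compat; nra. }
    assert (Hstep := saga_step_bound Hn fs gs P xs mu L gam beta kappa Hg Hb ltac:(lra) Hk ltac:(lra)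
                       Cb CD Cp Hfirm HF1 HL1 HT3).
    assert (Hit := saga_iter Hn fs gs gam P xs kappa (1 - gam * mu) ltac:(lra) Hstep k (saga_init x0)).
    assert (HD0 : forall y i, 0 <= Dfun fs gs xs i y).
    { intros y i. assert (H := HF1 i xs y). assert (H0 := norm2_nonneg (vsub y xs)). unfold Dfun. nra. }
    replace (mu / (2 * (mu * N + L))) with (gam * mu) by (unfold gam; field; lra).
    eapply Rle_trans.
    { apply (expect_le n k _ (fun s => Psi fs gs xs kappa (saga_run gs gam P s (saga_init x0)))).
      intros s. unfold Psi. assert (0 <= kappa * avg n (fun i => Dfun fs gs xs i (snd (saga_run gs gam P s (saga_init x0)) i))).
      { apply Rmult_le_pos; auto. rewrite <- (avg_const n 0) by auto. apply avg_le. auto. }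
      lra. }
    eapply Rle_trans; [exact Hit|].
    apply Rmult_le_compat_l; [apply pow_le; lra|].
    unfold Psi, saga_init. simpl fst. simpl snd.
    assert (ED : avg n (fun i => Dfun fs gs xs i x0) =
       / N * fsum n (fun i => fs i x0) - inner gstar (vsub x0 xs) - / N * fsum n (fun i => fs i xs)).
    { unfold Dfun. rewrite !avg_sub. unfold gstar. rewrite inner_vavg_l'. unfold avg, N. ring. }
    rewrite ED. fold gstar.
    assert (HD : 0 <= / N * fsum n (fun i => fs i x0) - inner gstar (vsub x0 xs) - / N * fsum n (fun i => fs i xs)).
    { rewrite <- ED. rewrite <- (avg_const n 0) by auto. apply avg_le. auto. }
    assert (Hkb : kappa <= N / (mu * N + L)).
    { unfold kappa. replace (N / (mu * N + L)) with (2 * gam * N) by (unfold gam; field; lra).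
      assert (0 <= 2 * gam * N * (gam * mu)) by (apply Rmult_le_pos; nra). nra. }
    assert (kappa * (/ N * fsum n (fun i => fs i x0) - inner gstar (vsub x0 xs) - / N * fsum n (fun i => fs i xs))
       <= N / (mu * N + L) * (/ N * fsum n (fun i => fs i x0) - inner gstar (vsub x0 xs) - / N * fsum n (fun i => fs i xs)))
      by (apply Rmult_le_compat_r; auto).
    lra.
Qed.
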